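(* Let $F:\mathbb{R}\to\mathbb{R}$ be a function (identified with its graph in $\mathbb{R}^2$). If $A\cap F\neq\emptyset$ for every closed set $A\subset\mathbb{R}^2$ such that $\pi(A)$ contains a nondegenerate interval, then $F$ is a connected subspace of $\mathbb{R}^2$.
   Context: $\pi:\mathbb{R}^2\to\mathbb{R}$ is the projection $(x,y)\mapsto x$. *)

(* Defs.v *)
From HB Require Import structures.
From mathcomp Require Import all_boot all_order all_algebra.
From mathcomp Require Import all_classical all_reals all_analysis.
Set Implicit Arguments. Unset Strict Implicit. Unset Printing Implicit Defensive.
Import Order.TTheory GRing.Theory Num.Theory numFieldNormedType.Exports.
Local Open Scope classical_set_scope.
Local Open Scope ring_scope.

Definition graph_of {R : realType} (F : R -> R) : set (R * R) :=
  [set p | p.2 = F p.1].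

Definition proj1 {R : realType} (p : R * R) : R := p.1.

(* Main.v *)
Require Import Defs.
From HB Require Import structures.
From mathcomp Require Import all_boot all_order all_algebra.
From mathcomp Require Import all_classical all_reals all_analysis.
From mathcomp Require Import lra.
Import Order.TTheory GRing.Theory Num.Theory numFieldNormedType.Exports.
Local Open Scope classical_set_scope.
Local Open Scope ring_scope.

Lemma R_split (R : realType) (P Q : set R) : open P -> open Q ->
  (forall x, P x \/ Q x) -> P !=set0 -> Q !=set0 -> exists x, P x /\ Q x.
Proof.
move=> oP oQ PQ P0 [q Qq]; apply: contrapT => nPQ.
have cT : connected (@setT R) by apply/connected_intervalP => x y _ _ z _.
have := cT P P0; have PT : P = setT `&` P by rewrite setTI.
move=> /(_ (ex_intro2 _ _ P oP PT)).
have PC : P = setT `&` ~` Q.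
  rewrite setTI; apply/seteqP; split => x /=.
    by move=> Px Qx; apply: nPQ; exists x.
  by move=> nQ; case: (PQ x).
move=> /(_ (ex_intro2 _ _ (~` Q) (open_closedC oQ) PC)) PTT.
by apply: nPQ; exists q; split => //; rewrite PTT.
Qed.

Lemma line_cont (R : realType) (c : R) : continuous (fun s : R => (c, s)).
Proof. move=> s; exact: (cvg_pair (cvg_cst c) cvg_id). Qed.

Theorem lemma2 (R : realType) (F : R -> R) :
  (forall A : set (R * R), closed A ->
     (exists a b : R, a < b /\ `]a, b[%classic `<=` proj1 @` A) ->
     A `&` graph_of F !=set0) ->
  connected (graph_of F).
Proof.
move=> H B [b Bb] [C oC BGC] [D cD BGD].
have BG : B `<=` graph_of F by rewrite BGC => ? [].
apply/seteqP; split => // g Gg; apply: contrapT => nBg.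
have hr : forall p : R * R, exists r : R, 0 < r /\
    forall q, graph_of F q -> ball p r q -> graph_of F p -> (B q <-> B p).
  move=> p; have [Bp|nBp] := pselect (B p).
    have Cp : C p by move: Bp; rewrite BGC => -[].
    have := oC p Cp; rewrite /interior => /nbhs_ballP [r r0 sub].
    exists r; split => // q Gq bq _; split => // _.
    by rewrite BGC; split => //; apply: sub.
  have [Gp|nGp] := pselect (graph_of F p); last first.
    by exists 1; split => // q _ _ /nGp.
  have nDp : ~ D p by move=> Dp; apply: nBp; rewrite BGD.
  have := closed_openC cD p nDp; rewrite /interior => /nbhs_ballP [r r0 sub].
  exists r; split => // q Gq bq _; split => // Bq; exfalso.
  by apply: (sub q bq); move: Bq; rewrite BGD => -[].
have [rho Hrho] := choice hr.
have rho0 : forall p, 0 < rho p / 2.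
  by move=> p; have [r0 _] := Hrho p; rewrite divr_gt0.
pose pt t := (t, F t).
have Gpt : forall t, graph_of F (pt t) by [].
have Gpt' : forall q, graph_of F q -> q = pt q.1.
  by case=> x y; rewrite /graph_of /= => ->.
pose bU z := exists t, B (pt t) /\ ball (pt t) (rho (pt t) / 2) z.
pose bV z := exists t, ~ B (pt t) /\ ball (pt t) (rho (pt t) / 2) z.
have disj : forall z, bU z -> bV z -> False.
  move=> z [t [Bt bt]] [u [Bu bu]].
  have [rt0 Ht] := Hrho (pt t); have [ru0 Hu] := Hrho (pt u).
  have [le|le] := leP (rho (pt u)) (rho (pt t)).
    have bu' : ball z (rho (pt t) / 2) (pt u).
      apply: (le_ball _ (ball_sym bu)); by rewrite ler_pM2r.
    have := ball_triangle bt bu'; rewrite -splitr => btu.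
    by apply: Bu; apply/(Ht (pt u) (Gpt u) btu (Gpt t)).
  have bt' : ball z (rho (pt u) / 2) (pt t).
    apply: (le_ball _ (ball_sym bt)); rewrite ler_pM2r //; exact: ltW.
  have := ball_triangle bu bt'; rewrite -splitr => btu.
  by apply: Bu; apply/(Hu (pt t) (Gpt t) btu (Gpt u)).
have obU : open bU.
  have -> : bU = \bigcup_(t in [set t | B (pt t)]) ball (pt t) (rho (pt t) / 2).
    by apply/seteqP; split => z; [case=> t [? ?]; exists t | case=> t ? ?; exists t].
  by apply: bigcup_open => t _; apply: ball_open.
have obV : open bV.
  have -> : bV = \bigcup_(t in [set t | ~ B (pt t)]) ball (pt t) (rho (pt t) / 2).
    by apply/seteqP; split => z; [case=> t [? ?]; exists t | case=> t ? ?; exists t].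
  by apply: bigcup_open => t _; apply: ball_open.
pose K := ~` (bU `|` bV).
have cK : closed K by apply: open_closedC; apply: openU.
have KG : forall t, ~ K (pt t).
  move=> t; rewrite /K /= => /not_orP [nU nV].
  have [Bt|Bt] := pselect (B (pt t)).
    by apply: nU; exists t; split => //; apply: ballxx.
  by apply: nV; exists t; split => //; apply: ballxx.
pose WU c := exists t, B (pt t) /\ ball t (rho (pt t) / 2) c.
pose WV c := exists t, ~ B (pt t) /\ ball t (rho (pt t) / 2) c.
have [c [[t [Bt bt]] [u [Bu bu]]]] : exists c, WU c /\ WV c.
  apply: R_split.
  - have -> : WU = \bigcup_(t in [set t | B (pt t)]) ball t (rho (pt t) / 2).
      by apply/seteqP; split => z; [case=> t [? ?]; exists t | case=> t ? ?; exists t].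
    by apply: bigcup_open => t _; apply: ball_open.
  - have -> : WV = \bigcup_(t in [set t | ~ B (pt t)]) ball t (rho (pt t) / 2).
      by apply/seteqP; split => z; [case=> t [? ?]; exists t | case=> t ? ?; exists t].
    by apply: bigcup_open => t _; apply: ball_open.
  - move=> x; have [Bx|Bx] := pselect (B (pt x)).
      by left; exists x; split => //; apply: ballxx.
    by right; exists x; split => //; apply: ballxx.
  - exists b.1; exists b.1; split; last by apply: ballxx.
    by move: (Bb); rewrite {1}(Gpt' b (BG b Bb)).
  - exists g.1; exists g.1; split; last by apply: ballxx.
    by move: (nBg); rewrite {1}(Gpt' g Gg).
have nI : nbhs c (ball t (rho (pt t) / 2) `&` ball u (rho (pt u) / 2)).
  apply: filterI.
    by apply: open_nbhs_nbhs; split => //; apply: ball_open.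
  by apply: open_nbhs_nbhs; split => //; apply: ball_open.
have /nbhs_ballP [e e0 sube] := nI.
have [z [Kz Gz]] : K `&` graph_of F !=set0.
  apply: H => //; exists (c - e), (c + e); split.
    by rewrite ltrBlDr -addrA ltrDl addr_gt0.
  move=> c' /=; rewrite in_itv /= => /andP [lc rc].
  have bc : ball c e c'.
    rewrite /ball /= ltr_norml; apply/andP; split.
      lra.
    lra.
  have [bt' bu'] := sube c' bc.
  apply: contrapT => nK.
  have lineK : forall s, bU (c', s) \/ bV (c', s).
    move=> s; apply: contrapT => /not_orP [h1 h2]; apply: nK.
    by exists (c', s) => //; rewrite /K /= => -[].
  have [s [Us Vs]] : exists s, bU (c', s) /\ bV (c', s).
    apply: R_split => //.
    - apply: (@open_comp _ _ (fun s : R => (c', s)) bU) => // s _; exact: line_cont.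
    - apply: (@open_comp _ _ (fun s : R => (c', s)) bV) => // s _; exact: line_cont.
    - exists (F t); exists t; split => //; split => //=; apply: ballxx.
      exact: rho0.
    - exists (F u); exists u; split => //; split => //=; apply: ballxx.
      exact: rho0.
  exact: disj Us Vs.
by rewrite (Gpt' z Gz) in Kz; apply: (KG z.1).
Qed.
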